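(* Let $n_1,\ldots,n_N$ be positive integers and let $\mathbf{R}=(R_1,\ldots,R_N)\in\mathcal{A}^{(n_1,\ldots,n_N)}$. Then the Taylor joint spectrum $\sigma_T(\mathbf{R})$ of the commuting family of operators $(R_k)_{ij}$, $k=1,\ldots,N$, $i,j=1,\ldots,n_k$ (regarded as a subset of $\mathbb{C}^{n_1\times n_1}\times\cdots\times\mathbb{C}^{n_N\times n_N}$) satisfies $$\sigma_T(\mathbf{R})\subset\Pi^{n_1\times n_1}\times\cdots\times\Pi^{n_N\times n_N}.$$
   Context: For a positive integer $n$, $\Pi^{n\times n}:=\{M\in\mathbb{C}^{n\times n}: M+M^*>0\}$. $\mathcal{A}^{(n_1,\ldots,n_N)}$ denotes the class of $N$-tuples $\mathbf{R}=(R_1,\ldots,R_N)$ where, for some Hilbert space $\mathcal{H}_\mathbf{R}$ and some commutative algebra $\mathcal{B}_\mathbf{R}\subset L(\mathcal{H}_\mathbf{R})$, each $R_k$ is an $n_k\times n_k$ matrix with entries $(R_k)_{ij}\in\mathcal{B}_\mathbf{R}$ (regarded as an operator on $\mathbb{C}^{n_k}\otimes\mathcal{H}_\mathbf{R}$), and there is a real constant $s_\mathbf{R}>0$ with $R_k+R_k^*\geq s_\mathbf{R}I_{\mathbb{C}^{n_k}\otimes\mathcal{H}_\mathbf{R}}$ for $k=1,\ldots,N$. *)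

(* Defs.v *)
From mathcomp Require Import all_boot all_order all_algebra.
From mathcomp Require Import complex reals.
Set Implicit Arguments. Unset Strict Implicit. Unset Printing Implicit Defensive.
Import Order.TTheory GRing.Theory Num.Theory.
Local Open Scope ring_scope.

Section HilbertDefs.
Variable R : realType.
Variable H : lmodType R[i].
Variable ip : H -> H -> R[i].

(* inner-product axioms (the order on R[i] is the usual partial order on C:
   0 <= z iff z is real and nonnegative) *)
Definition inner_product_axioms : Prop :=
  [/\ (forall (a : R[i]) (x y z : H), ip (a *: x + y) z = a * ip x z + ip y z),
      (forall x y : H, ip y x = (ip x y)^*),
      (forall x : H, 0 <= ip x x) &
      (forall x : H, ip x x = 0 -> x = 0)].

(* completeness for the norm ||x|| = sqrt <x,x> (stated with squared norms) *)
Definition ip_complete : Prop :=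
  forall u : nat -> H,
    (forall e : R, 0 < e -> exists N : nat, forall m k : nat, (N <= m)%N -> (N <= k)%N ->
        ip (u m - u k) (u m - u k) < (e%:C)%C) ->
    exists l : H, forall e : R, 0 < e -> exists N : nat, forall k : nat, (N <= k)%N ->
        ip (u k - l) (u k - l) < (e%:C)%C.

Definition is_hilbert : Prop := inner_product_axioms /\ ip_complete.

Definition bounded_op (T : H -> H) : Prop :=
  (forall (a : R[i]) (x y : H), T (a *: x + y) = a *: T x + T y) /\
  exists c : R, forall x : H, ip (T x) (T x) <= (c%:C)%C * ip x x.

Definition commutative_subalgebra (B : (H -> H) -> Prop) : Prop :=
  [/\ (forall T, B T -> bounded_op T),
      (forall S T, B S -> B T -> B (fun x => S x + T x)),
      (forall (a : R[i]) T, B T -> B (fun x => a *: T x)),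
      (forall S T, B S -> B T -> B (S \o T)) &
      (forall S T, B S -> B T -> S \o T = T \o S)].

(* C^n (x) H as n-tuples of vectors, its inner product, and the action of an
   n x n operator matrix *)
Definition ipn (n : nat) (x y : 'I_n -> H) : R[i] := \sum_(i < n) ip (x i) (y i).
Definition opmx_apply (n : nat) (M : 'I_n -> 'I_n -> H -> H) (x : 'I_n -> H) :
  'I_n -> H := fun i => \sum_(j < n) M i j (x j).

(* Koszul complex of (T_j - lam_j)_{j in I}: the space is the direct sum over
   subsets S of I (S <-> e_S in the exterior algebra of C^I, tensor H), and
   d(e_S (x) h) = sum_{j notin S} e_j /\ e_S (x) (T_j - lam_j) h,
   using the order of I given by enum_rank. *)
Definition koszul_d (I : finType) (T : I -> H -> H) (lam : I -> R[i])
  (x : {set I} -> H) : {set I} -> H :=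
  fun S => \sum_(j in S)
    ((-1) ^+ #|[set i in S | (enum_rank i < enum_rank j)%N]|) *:
       (T j (x (S :\ j)) - lam j *: x (S :\ j)).

Definition taylor_spectrum (I : finType) (T : I -> H -> H) (lam : I -> R[i]) : Prop :=
  ~ (forall x : {set I} -> H, (forall S, koszul_d T lam x S = 0) ->
        exists y : {set I} -> H, forall S, koszul_d T lam y S = x S).

End HilbertDefs.

Definition conjtr (R : realType) (m n : nat) (A : 'M[R[i]]_(m, n)) : 'M[R[i]]_(n, m) :=
  (map_mx Num.conj A)^T.

Definition in_Pi (R : realType) (n : nat) (M : 'M[R[i]]_n) : Prop :=
  forall v : 'cV[R[i]]_n, v != 0 ->
    0 < (conjtr v *m (M + conjtr M) *m v) ord0 ord0.

(* index set of the family (R_k)_{ij}, k < N, i, j < n_k *)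
Definition entry_index (N : nat) (n : 'I_N -> nat) : finType :=
  {k : 'I_N & ('I_(n k) * 'I_(n k))%type}.

(* Main.v *)
Require Import Defs.
From mathcomp Require Import all_boot all_order all_algebra.
From mathcomp Require Import complex reals.
From mathcomp Require Import ring lra.
From Stdlib Require Import Classical.
Import Order.TTheory GRing.Theory Num.Theory.
Local Open Scope ring_scope.
Set Implicit Arguments. Unset Strict Implicit. Unset Printing Implicit Defensive.

Section CplxFacts.
Variable R : realType.
Implicit Types x y : R[i].
Lemma conjE x : x^* = conjc x. Proof. by []. Qed.
Lemma ReM (t : R) x : complex.Re ((t%:C)%C * x) = t * complex.Re x.
Proof. case: x => a b /=. by rewrite !mul0r subr0. Qed.
Lemma ReD x y : complex.Re (x + y) = complex.Re x + complex.Re y.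
Proof. by case: x; case: y. Qed.
Lemma ReN x : complex.Re (- x) = - complex.Re x.
Proof. by case: x. Qed.
Lemma ReJ x : complex.Re (x^*) = complex.Re x.
Proof. by case: x. Qed.
Lemma ge0_C x : 0 <= x -> x = ((complex.Re x)%:C)%C.
Proof. move=> h; have := ger0_Im h. case: x {h} => a b /= ->. by []. Qed.
Lemma conj_realC (t : R) : ((t%:C)%C)^* = (t%:C)%C.
Proof. by rewrite conjE /= oppr0. Qed.
Lemma ReC (t : R) : complex.Re ((t%:C)%C) = t. Proof. by []. Qed.
Lemma ReMr (t : R) x : complex.Re (x * (t%:C)%C) = complex.Re x * t.
Proof. by rewrite mulrC ReM mulrC. Qed.
End CplxFacts.

Section IP.
Variable R : realType.
Variable H : lmodType R[i].
Variable ip : H -> H -> R[i].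
Hypothesis ax : inner_product_axioms ip.

Lemma ipDZl a x y z : ip (a *: x + y) z = a * ip x z + ip y z.
Proof. by case: ax. Qed.
Lemma ip_sym x y : ip y x = (ip x y)^*.
Proof. by case: ax. Qed.
Lemma ip0l z : ip 0 z = 0.
Proof.
have := ipDZl 1 0 0 z; rewrite scaler0 addr0 mul1r.
by move/(congr1 (fun w => w - ip 0 z)); rewrite addrK subrr.
Qed.
Lemma ipDl x y z : ip (x + y) z = ip x z + ip y z.
Proof. by rewrite -[x]scale1r ipDZl mul1r scale1r. Qed.
Lemma ipZl a x z : ip (a *: x) z = a * ip x z.
Proof. by rewrite -[a *: x]addr0 ipDZl ip0l addr0. Qed.
Lemma ipNl x z : ip (- x) z = - ip x z.
Proof. by rewrite -scaleN1r ipZl mulN1r. Qed.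
Lemma ipBl x y z : ip (x - y) z = ip x z - ip y z.
Proof. by rewrite ipDl ipNl. Qed.
Lemma ipDr x y z : ip z (x + y) = ip z x + ip z y.
Proof. by rewrite [LHS]ip_sym ipDl rmorphD /= -!ip_sym. Qed.
Lemma ipZr a x z : ip z (a *: x) = a^* * ip z x.
Proof. by rewrite [LHS]ip_sym ipZl rmorphM /= -ip_sym. Qed.
Lemma ipNr x z : ip z (- x) = - ip z x.
Proof. by rewrite -scaleN1r ipZr rmorphN rmorph1 mulN1r. Qed.
Lemma ipBr x y z : ip z (x - y) = ip z x - ip z y.
Proof. by rewrite ipDr ipNr. Qed.
Lemma ip0r z : ip z 0 = 0.
Proof. by rewrite -(scale0r 0) ipZr rmorph0 mul0r. Qed.

Definition Nm x := complex.Re (ip x x).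
Definition Pr x y := complex.Re (ip x y).

Lemma ipxx x : ip x x = ((Nm x)%:C)%C.
Proof. by apply: ge0_C; case: ax. Qed.
Lemma Nm_ge0 x : 0 <= Nm x.
Proof. case: ax => _ _ h _; have := h x; rewrite ipxx lecE /=. by case/andP. Qed.
Lemma Nm_eq0 x : Nm x = 0 -> x = 0.
Proof. move=> h; case: ax => _ _ _; apply; by rewrite ipxx h. Qed.
Lemma Pr_sym x y : Pr x y = Pr y x.
Proof. by rewrite /Pr ip_sym ReJ. Qed.
Lemma NmD x y : Nm (x + y) = Nm x + Nm y + Pr x y *+ 2.
Proof.
rewrite /Nm ipDl !ipDr !ReD -/(Pr x y) -/(Pr y x) Pr_sym -/(Nm x) -/(Nm y).
by rewrite mulr2n; lra.
Qed.
Lemma PrZl (t : R) x y : Pr ((t%:C)%C *: x) y = t * Pr x y.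
Proof. by rewrite /Pr ipZl ReM. Qed.
Lemma PrNl x y : Pr (- x) y = - Pr x y.
Proof. by rewrite /Pr ipNl ReN. Qed.
Lemma PrZr (t : R) x y : Pr y ((t%:C)%C *: x) = t * Pr y x.
Proof. by rewrite Pr_sym PrZl Pr_sym. Qed.
Lemma NmN x : Nm (- x) = Nm x.
Proof. by rewrite /Nm ipNl ipNr opprK. Qed.
Lemma NmB x y : Nm (x - y) = Nm (y - x).
Proof. by rewrite -NmN opprB. Qed.
Lemma NmZ a x : Nm (a *: x) = complex.Re (a * a^*) * Nm x.
Proof. by rewrite /Nm ipZl ipZr mulrA ipxx ReMr. Qed.
Lemma NmZr (t : R) x : Nm ((t%:C)%C *: x) = t ^+ 2 * Nm x.
Proof. by rewrite NmZ conj_realC -rmorphM ReC. Qed.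

Lemma PrNr x y : Pr y (- x) = - Pr y x.
Proof. by rewrite Pr_sym PrNl Pr_sym. Qed.

Lemma NmD2 x y : Nm (x + y) <= Nm x *+ 2 + Nm y *+ 2.
Proof.
have h := Nm_ge0 (x - y).
rewrite NmD NmN PrNr in h. rewrite NmD. rewrite !mulr2n in h *. lra.
Qed.

Lemma NmDe (e : R) x y : 0 < e ->
  Nm (x + y) <= (1 + e) * Nm x + (1 + e^-1) * Nm y.
Proof.
move=> e0.
have h := Nm_ge0 ((e%:C)%C *: x - y).
have h2 : 0 <= e^-1 * Nm ((e%:C)%C *: x - y) by rewrite mulr_ge0 // invr_ge0 ltW.
rewrite NmD NmN PrNr PrZl NmZr in h2.
have E : e^-1 * (e ^+ 2 * Nm x + Nm y + - (e * Pr x y) *+ 2)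
   = e * Nm x + e^-1 * Nm y - Pr x y *+ 2.
  by rewrite !mulr2n; field; rewrite gt_eqF.
rewrite E in h2.
rewrite NmD !mulrDl !mul1r; rewrite !mulr2n in h2 *. lra.
Qed.
End IP.

Lemma bernoulli {R : realType} (d : R) n : 0 <= d -> 1 + n%:R * d <= (1 + d) ^+ n.
Proof.
move=> d0; elim: n => [|n IH]; first by rewrite mul0r addr0 expr0.
rewrite exprSr.
have h1 : 0 <= 1 + d by lra.
have := ler_wpM2r h1 IH.
have : 0 <= n%:R * d * d by rewrite mulr_ge0 // mulr_ge0 // ler0n.
rewrite -natr1; move=> h2 h3; apply: le_trans h3.
rewrite mulrDl !mulrDr !mulr1 mul1r mulrDl mul1r. lra.
Qed.

Lemma geo_small (R : realType) (q B e : R) : 0 < q -> q < 1 -> 0 < e ->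
  exists K, forall k, (K <= k)%N -> q ^+ k * B < e.
Proof.
move=> q0 q1 e0.
set d := q^-1 - 1.
have d0 : 0 < d.
  rewrite /d subr_gt0 -[1]invr1 ltf_pV2 ?posrE //. 
have ed0 : 0 < e * d by rewrite mulr_gt0.
have a0 : 0 <= `|B| / (e * d) by rewrite divr_ge0 // ltW.
exists (Num.bound (`|B| / (e * d))) => k hk.
have hb := archi_boundP a0.
have hk' : `|B| / (e * d) < k%:R.
  apply: lt_le_trans hb _; by rewrite ler_nat.
have h1 : `|B| < e * d * k%:R.
  by rewrite -ltr_pdivrMl // mulrC.
have h2 := @bernoulli R d k (ltW d0).
have Y0 : 0 < (1 + d) ^+ k by rewrite exprn_gt0 // addr_gt0.
have hq : q ^+ k = ((1 + d) ^+ k)^-1.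
  by rewrite /d addrC subrK exprVn invrK.
rewrite hq ltr_pdivrMl //.
have : B <= `|B| by apply: ler_norm.
have : 0 <= e by apply: ltW.
move=> he hB.
have : e * (1 + k%:R * d) <= e * (1 + d) ^+ k by rewrite ler_wpM2l.
have : e * d * k%:R < e * (1 + k%:R * d).
  have -> : e * (1 + k%:R * d) = e + e * d * k%:R by ring.
  lra.
lra.
Qed.

Lemma le0_of_small (R : realType) (X : R) : (forall e, 0 < e -> X <= e) -> X <= 0.
Proof.
move=> h; case: (lerP X 0) => // hX.
have := h (X / 2%:R); rewrite divr_gt0 // => /(_ isT) hh.
have : X / 2%:R < X by rewrite ltr_pdivrMr // ltr_pMr // ltr1n.
by rewrite ltNge hh.
Qed.

Section Surj.
Variable R : realType.
Variable H : lmodType R[i].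
Variable ip : H -> H -> R[i].
Hypothesis ax : inner_product_axioms ip.
Hypothesis cp : ip_complete ip.
Variable A : H -> H.
Hypothesis Alin : forall a x y, A (a *: x + y) = a *: A x + A y.
Local Notation N := (Nm ip).
Local Notation P := (Pr ip).

Lemma lA0 : A 0 = 0.
Proof.
have := Alin 1 0 0; rewrite scaler0 addr0 scale1r.
by move/(congr1 (fun w => w - A 0)); rewrite addrK subrr.
Qed.
Lemma lAD x y : A (x + y) = A x + A y.
Proof. by rewrite -[x]scale1r Alin !scale1r. Qed.
Lemma lAZ a x : A (a *: x) = a *: A x.
Proof. by rewrite -[a *: x]addr0 Alin lA0 addr0. Qed.
Lemma lAN x : A (- x) = - A x.
Proof. by rewrite -scaleN1r lAZ scaleN1r. Qed.
Lemma lAB x y : A (x - y) = A x - A y.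
Proof. by rewrite lAD lAN. Qed.

Lemma A_surj (M0 c : R) : 0 < c -> (forall x, N (A x) <= M0 * N x) ->
  (forall x, c * N x <= P (A x) x) -> forall y, exists x, A x = y.
Proof.
move=> c0 hM hc y.
set M := `|M0| + c ^+ 2 + 1.
have M0' : 0 < M by rewrite /M; have := normr_ge0 M0; have := sqr_ge0 c; lra.
have hM' : forall x, N (A x) <= M * N x.
  move=> x; apply: le_trans (hM x) _; apply: ler_wpM2r; first exact: (Nm_ge0 ax).
  rewrite /M; have := ler_norm M0; have := sqr_ge0 c; lra.
set t := c / M.
set q := 1 - c ^+ 2 / M.
have cM : c ^+ 2 < M by rewrite /M; have := normr_ge0 M0; lra.
have q0 : 0 < q by rewrite /q subr_gt0 ltr_pdivrMr // mul1r.
have q1 : q < 1.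
  rewrite /q; have : 0 < c ^+ 2 / M by rewrite divr_gt0 // exprn_gt0. lra.
have t0 : 0 < t by rewrite divr_gt0.
pose Phi x := x + (t%:C)%C *: (y - A x).
have contr : forall x x', N (Phi x - Phi x') <= q * N (x - x').
  move=> x x'.
  have -> : Phi x - Phi x' = (x - x') + (- ((t%:C)%C *: A (x - x'))).
    rewrite /Phi opprD addrACA -scalerBr lAB; congr (_ + _).
    rewrite -scalerN; congr (_ *: _).
    by rewrite !opprB [LHS]addrC addrA subrK.
  set z := x - x'.
  rewrite (NmD ax) (NmN ax) (PrNr ax) (PrZr ax) (NmZr ax).
  have h1 := hM' z.
  have h2 := hc z.
  rewrite (Pr_sym ax) in h2.
  have h1' : t ^+ 2 * N (A z) <= c ^+ 2 / M * N z.
    have -> : c ^+ 2 / M * N z = t ^+ 2 * (M * N z).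
      by rewrite /t; field; rewrite gt_eqF.
    by apply: ler_wpM2l => //; rewrite sqr_ge0.
  have h2' : c ^+ 2 / M * N z <= t * P z (A z).
    have -> : c ^+ 2 / M * N z = t * (c * N z).
      by rewrite /t; field; rewrite gt_eqF.
    by apply: ler_wpM2l => //; apply: ltW.
  rewrite /q mulrBl mul1r mulr2n. lra.
have Nge := Nm_ge0 ax.
have itc : forall k a b, N (iter k Phi a - iter k Phi b) <= q ^+ k * N (a - b).
  elim=> [|k IH] a b; first by rewrite expr0 mul1r.
  rewrite !iterS exprS -mulrA; apply: le_trans (contr _ _) _.
  by apply: ler_wpM2l; [apply: ltW|apply: IH].
pose xs k := iter k Phi 0.
set eps := (1 - q) / (q *+ 2).
have eps0 : 0 < eps by rewrite divr_gt0 // ?subr_gt0 // pmulrn_rgt0.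
set K := (1 + eps^-1) * N (Phi 0).
set Bd := K * 2%:R / (1 - q).
have orb : forall j, N (xs j) <= Bd.
  elim=> [|j IH].
    rewrite /xs /= -(subrr (0:H)) -/(Nm ip (0 - 0)) subrr.
    have -> : N 0 = 0 by rewrite /Nm (ip0l ax).
    rewrite /Bd /K divr_ge0 // ?subr_ge0 ?(ltW q1) // mulr_ge0 //.
    by rewrite mulr_ge0 // addr_ge0 // invr_ge0 ltW.
  have -> : xs j.+1 = (Phi (xs j) - Phi 0) + Phi 0 by rewrite subrK.
  apply: le_trans (NmDe ax _ _ eps0) _.
  have h1 := contr (xs j) 0. rewrite subr0 in h1.
  have h2 : (1 + eps) * N (Phi (xs j) - Phi 0) <= (1 + eps) * q * Bd.
    rewrite -mulrA; apply: ler_wpM2l; first by rewrite addr_ge0 // ltW.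
    apply: le_trans h1 _; apply: ler_wpM2l => //; exact: ltW.
  have E : (1 + eps) * q * Bd + K = Bd.
    rewrite /Bd /eps; field.
    by rewrite !lt0r_neq0 // subr_gt0.
  rewrite -/K; apply: (le_trans (y := (1 + eps) * q * Bd + K)); first by rewrite lerD2r.
  by rewrite E.
have cau : forall m k, (k <= m)%N -> N (xs m - xs k) <= q ^+ k * Bd.
  move=> m k hkm; rewrite /xs -(subnKC hkm) iterD.
  apply: le_trans (itc _ _ _) _; rewrite subr0; apply: ler_wpM2l; last exact: orb.
  by rewrite exprn_ge0 // ltW.
have [l hl] : exists l, forall e : R, 0 < e -> exists N0 : nat, forall k : nat, (N0 <= k)%N ->
        ip (xs k - l) (xs k - l) < (e%:C)%C.
  apply: cp => e e0.
  have [K0 hK0] := geo_small Bd q0 q1 e0.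
  exists K0 => m k hm hk; rewrite (ipxx ax) ltcR.
  case: (leqP k m) => hkm.
    by apply: le_lt_trans (cau _ _ hkm) (hK0 _ hk).
  by rewrite (NmB ax); apply: le_lt_trans (cau _ _ (ltnW hkm)) (hK0 _ hm).
have fix0 : N (Phi l - l) <= 0.
  apply: le0_of_small => e e0.
  have e4 : 0 < e / 4%:R by rewrite divr_gt0.
  have [N0 hN0] := hl _ e4.
  have h1 := hN0 N0 (leqnn _); have h2 := hN0 N0.+1 (leqnSn _).
  rewrite (ipxx ax) ltcR in h1. rewrite (ipxx ax) ltcR in h2.
  have -> : Phi l - l = (Phi l - Phi (xs N0)) + (xs N0.+1 - l) by rewrite addrA subrK.
  apply: le_trans (NmD2 ax _ _) _.
  have h3 := contr l (xs N0). rewrite [N (l - _)](NmB ax) in h3.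
  have h4 : q * N (xs N0 - l) <= N (xs N0 - l).
    by rewrite ler_piMl // ltW.
  rewrite !mulr2n. have := Nge (xs N0 - l). lra.
have fix1 : Phi l = l.
  apply/eqP; rewrite -subr_eq0; apply/eqP; apply: (Nm_eq0 ax).
  by apply/le_anti; rewrite fix0 Nge.
exists l.
have : (t%:C)%C *: (y - A l) = 0 by apply: (@addrI _ l); rewrite addr0.
move/(congr1 (fun w => ((t^-1)%:C)%C *: w)); rewrite scalerA -rmorphM mulVf ?gt_eqF //.
by rewrite scale1r scaler0 => /eqP; rewrite subr_eq0 => /eqP.
Qed.
End Surj.

Section Koszul.
Variable R : realType.
Variable H : lmodType R[i].
Variable I : finType.
Variable T : I -> H -> H.
Variable lam : I -> R[i].
Variable U : I -> H -> H.
Definition Dk j y := T j y - lam j *: y.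
Hypothesis TL : forall j a x y, T j (a *: x + y) = a *: T j x + T j y.
Hypothesis UL : forall j a x y, U j (a *: x + y) = a *: U j x + U j y.
Hypothesis DU : forall j l y, Dk j (U l y) = U l (Dk j y).
Hypothesis sumUD : forall y, \sum_j U j (Dk j y) = y.

Lemma lin0 (f : H -> H) : (forall a x y, f (a *: x + y) = a *: f x + f y) -> f 0 = 0.
Proof.
move=> fl; have := fl 1 0 0; rewrite scaler0 addr0 scale1r.
by move/(congr1 (fun w => w - f 0)); rewrite addrK subrr.
Qed.
Lemma linD (f : H -> H) : (forall a x y, f (a *: x + y) = a *: f x + f y) ->
  forall x y, f (x + y) = f x + f y.
Proof. by move=> fl x y; rewrite -[x]scale1r fl !scale1r. Qed.
Lemma linZ (f : H -> H) : (forall a x y, f (a *: x + y) = a *: f x + f y) ->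
  forall a x, f (a *: x) = a *: f x.
Proof. by move=> fl a x; rewrite -[a *: x]addr0 fl (lin0 fl) addr0. Qed.
Lemma linN (f : H -> H) : (forall a x y, f (a *: x + y) = a *: f x + f y) ->
  forall x, f (- x) = - f x.
Proof. by move=> fl x; rewrite -scaleN1r (linZ fl) scaleN1r. Qed.
Lemma linB (f : H -> H) : (forall a x y, f (a *: x + y) = a *: f x + f y) ->
  forall x y, f (x - y) = f x - f y.
Proof. by move=> fl x y; rewrite (linD fl) (linN fl). Qed.
Lemma linsum (f : H -> H) : (forall a x y, f (a *: x + y) = a *: f x + f y) ->
  forall (J : Type) (r : seq J) (P : pred J) (F : J -> H),
  f (\sum_(i <- r | P i) F i) = \sum_(i <- r | P i) f (F i).
Proof. by move=> fl J r P F; apply: (big_morph f (linD fl) (lin0 fl)). Qed.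

Lemma DL j a x y : Dk j (a *: x + y) = a *: Dk j x + Dk j y.
Proof.
rewrite /Dk TL scalerDr scalerA mulrC -scalerA.
by rewrite scalerBr opprD !addrA; congr (_ + _); rewrite -!addrA; congr (_ + _); rewrite addrC.
Qed.

Definition sg (S : {set I}) (j : I) : R[i] :=
  (-1) ^+ #|[set i in S | (enum_rank i < enum_rank j)%N]|.

Lemma sg_D1 (S : {set I}) (j l : I) : j \in S ->
  sg S l = (-1) ^+ (enum_rank j < enum_rank l)%N * sg (S :\ j) l.
Proof.
move=> hj; rewrite /sg -exprD; congr (_ ^+ _).
rewrite (cardsD1 j) inE hj /=. apply: congr1.
by apply: eq_card => i; rewrite !inE andbA.
Qed.

Lemma sgsq n : (-1) ^+ n * (-1) ^+ n = 1 :> R[i].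
Proof. by rewrite -exprD addnn -mul2n exprM sqrrN expr1n expr1n. Qed.

Lemma rk_tot (j l : I) : j != l ->
  ((enum_rank j < enum_rank l)%N + (enum_rank l < enum_rank j)%N = 1)%N.
Proof.
move=> hjl; case: (ltngtP (enum_rank j) (enum_rank l)) => //.
by move/val_inj/enum_rank_inj => e; rewrite e eqxx in hjl.
Qed.

Definition hk (x : {set I} -> H) (S : {set I}) : H :=
  \sum_(l | l \notin S) sg S l *: U l (x (l |: S)).

Lemma kdE x S : koszul_d T lam x S = \sum_(j in S) sg S j *: Dk j (x (S :\ j)).
Proof. by []. Qed.

Lemma sg_self (S : {set I}) j : j \in S -> sg (S :\ j) j = sg S j.
Proof. by move=> hj; rewrite (sg_D1 j hj) ltnn /= expr0 mul1r. Qed.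

Lemma homotopy x S : koszul_d T lam (hk x) S + hk (koszul_d T lam x) S = x S.
Proof.
have E1 : koszul_d T lam (hk x) S =
  \sum_(j in S) Dk j (U j (x S)) +
  \sum_(j in S) \sum_(l | l \notin S)
      (sg S j * sg (S :\ j) l) *: Dk j (U l (x (l |: (S :\ j)))).
  rewrite kdE -big_split /=; apply: eq_bigr => j hj.
  rewrite /hk (linsum (@DL j)) scaler_sumr (bigD1 j) /=; last by rewrite !inE eqxx.
  congr (_ + _).
    by rewrite (linZ (@DL j)) scalerA setD1K // sg_self // /sg sgsq scale1r.
  apply: eq_big => [l|l _]; last by rewrite (linZ (@DL j)) scalerA.
  rewrite !inE negb_and negbK; case: (l =P j) => [->|_] /=; by rewrite ?hj ?andbT.
have E2 : hk (koszul_d T lam x) S =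
  \sum_(l | l \notin S) U l (Dk l (x S)) +
  \sum_(l | l \notin S) \sum_(j in S)
      (sg S l * sg (l |: S) j) *: U l (Dk j (x ((l |: S) :\ j))).
  rewrite /hk -big_split /=; apply: eq_bigr => l hl.
  rewrite kdE (linsum (UL l)) scaler_sumr (bigD1 l) /=; last by rewrite setU11.
  congr (_ + _).
    have e : sg (l |: S) l = sg S l by rewrite -{2}(setU1K hl) sg_self // setU11.
    by rewrite (linZ (UL l)) scalerA setU1K // e /sg sgsq scale1r.
  apply: eq_big => [j|j _]; last by rewrite (linZ (UL l)) scalerA.
  rewrite !inE; case: (j =P l) => [->|_] /=; by rewrite ?(negbTE hl) ?andbT.
have Ed : \sum_(j in S) Dk j (U j (x S)) + \sum_(l | l \notin S) U l (Dk l (x S)) = x S.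
  rewrite -[RHS](sumUD (x S)) [RHS](bigID (fun j => j \in S)) /=.
  by congr (_ + _); apply: eq_bigr => j _; rewrite DU.
have Ec : \sum_(j in S) \sum_(l | l \notin S)
      (sg S j * sg (S :\ j) l) *: Dk j (U l (x (l |: (S :\ j)))) +
   \sum_(l | l \notin S) \sum_(j in S)
      (sg S l * sg (l |: S) j) *: U l (Dk j (x ((l |: S) :\ j))) = 0.
  rewrite [X in _ + X]exchange_big /= -big_split big1 // => j hj.
  rewrite -big_split big1 // => l hl.
  have hjl : j != l by apply/eqP => e; move: hl; rewrite -e hj.
  have eS : l |: (S :\ j) = (l |: S) :\ j.
    apply/setP => i; rewrite !inE; case: (i =P j) => [->|_] /=; by rewrite ?(negbTE hjl).
  have sgl := sg_D1 l hj.
  have sgj := sg_D1 j (setU11 l S); rewrite setU1K // in sgj.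
  have eb : sg S l * sg (l |: S) j = - (sg S j * sg (S :\ j) l).
    rewrite sgl sgj mulrACA -exprD rk_tot // expr1 mulN1r; congr (- _); exact: mulrC.
  rewrite eb DU eS scaleNr. exact: subrr.
by rewrite E1 E2 addrACA Ed Ec addr0.
Qed.

Lemma koszul_exact : ~ taylor_spectrum T lam.
Proof.
apply => x hx; exists (hk x) => S.
have := homotopy x S.
have -> : hk (koszul_d T lam x) S = 0.
  rewrite /hk big1 // => l _; rewrite hx (lin0 (UL l)); exact: scaler0.
by rewrite addr0.
Qed.
End Koszul.

Section Bnd.
Variable R : realType.
Variable H : lmodType R[i].
Variable ip : H -> H -> R[i].
Hypothesis ax : inner_product_axioms ip.
Local Notation N := (Nm ip).

Definition bnd (f : H -> H) := exists M : R, forall y, N (f y) <= M * N y.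

Lemma Nm0 : N 0 = 0. Proof. by rewrite /Nm (ip0l ax). Qed.

Lemma bnd_add f g : bnd f -> bnd g -> bnd (fun y => f y + g y).
Proof.
move=> [M1 h1] [M2 h2]; exists (M1 *+ 2 + M2 *+ 2) => y.
apply: le_trans (NmD2 ax _ _) _.
have := h1 y; have := h2 y; rewrite !mulr2n mulrDl !mulrDl. lra.
Qed.

Lemma ReJJ_ge0 (a : R[i]) : 0 <= complex.Re (a * a^*).
Proof. by have := mul_conjC_ge0 a; rewrite lecE => /andP[]. Qed.

Lemma bnd_scale a f : bnd f -> bnd (fun y => a *: f y).
Proof.
move=> [M h]; exists (complex.Re (a * a^*) * M) => y.
rewrite (NmZ ax) -mulrA; apply: ler_wpM2l; [exact: ReJJ_ge0| exact: h].
Qed.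

Lemma bnd_sum (J : Type) (r : seq J) (P : pred J) (F : J -> H -> H) :
  (forall p, bnd (F p)) -> bnd (fun y => \sum_(p <- r | P p) F p y).
Proof.
move=> hF; elim: r => [|p r [M IH]].
  by exists 0 => y; rewrite big_nil Nm0 mul0r.
have [M1 h1] := hF p.
exists (M1 *+ 2 + M *+ 2) => y; rewrite big_cons.
case: (P p).
  apply: le_trans (NmD2 ax _ _) _.
  have := h1 y; have := IH y; rewrite !mulr2n mulrDl !mulrDl. lra.
have := h1 y; have := IH y; have := Nm_ge0 ax (F p y).
have := Nm_ge0 ax (\sum_(j <- r | P j) F j y). rewrite !mulr2n mulrDl !mulrDl. lra.
Qed.

Lemma bnd_op f : bounded_op ip f -> bnd f.
Proof.
move=> [_ [c hc]]; exists c => y; have := hc y.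
by rewrite !(ipxx ax) -rmorphM lecR.
Qed.

Lemma ipSl (J : Type) (r : seq J) (P : pred J) (F : J -> H) z :
  ip (\sum_(i <- r | P i) F i) z = \sum_(i <- r | P i) ip (F i) z.
Proof.
apply: (big_morph (fun x => ip x z)) => [a b|]; [exact: (ipDl ax) | exact: (ip0l ax)].
Qed.
Lemma ipSr (J : Type) (r : seq J) (P : pred J) (F : J -> H) z :
  ip z (\sum_(i <- r | P i) F i) = \sum_(i <- r | P i) ip z (F i).
Proof.
apply: (big_morph (fun x => ip z x)) => [a b|]; [exact: (ipDr ax) | exact: (ip0r ax)].
Qed.
Lemma ipn_sym m (x y : 'I_m -> H) : ipn ip x y = (ipn ip y x)^*.
Proof. by rewrite /ipn rmorph_sum; apply: eq_bigr => i _; rewrite (ip_sym ax). Qed.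
End Bnd.

Lemma ReS (R : realType) (J : Type) (r : seq J) (P : pred J) (F : J -> R[i]) :
  complex.Re (\sum_(i <- r | P i) F i) = \sum_(i <- r | P i) complex.Re (F i).
Proof. by apply: (big_morph (@complex.Re R)) => [a b|]; [exact: ReD|]. Qed.

Lemma addJ (R : realType) (z : R[i]) : z + z^* = ((complex.Re z *+ 2)%:C)%C.
Proof. by case: z => a b; rewrite conjE; simpc; rewrite mulr2n. Qed.

Lemma quadE (R : realType) m (A : 'M[R[i]]_m) (u : 'cV[R[i]]_m) :
  (conjtr u *m A *m u) ord0 ord0 = \sum_j \sum_i (u i ord0)^* * A i j * u j ord0.
Proof.
rewrite mxE; apply: eq_bigr => j _; rewrite mxE mulr_suml; apply: eq_bigr => i _.
by rewrite /conjtr !mxE.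
Qed.


Unset Implicit Arguments.

Theorem theorem3p2 (R : realType) (H : lmodType R[i]) (ip : H -> H -> R[i])
  (N : nat) (n : 'I_N -> nat)
  (Rop : forall k : 'I_N, 'I_(n k) -> 'I_(n k) -> H -> H)
  (B : (H -> H) -> Prop) (s : R) :
  (forall k, (0 < n k)%N) ->
  is_hilbert ip ->
  commutative_subalgebra ip B ->
  (forall k i j, B (Rop k i j)) ->
  0 < s ->
  (forall k (x : 'I_(n k) -> H),
      (s%:C)%C * ipn ip x x <= ipn ip (opmx_apply (Rop k) x) x + ipn ip x (opmx_apply (Rop k) x)) ->
  forall lam : entry_index n -> R[i],
    taylor_spectrum (fun p : entry_index n => Rop (tag p) (tagged p).1 (tagged p).2) lam ->
    forall k : 'I_N, in_Pi (\matrix_(i < n k, j < n k) lam (@Tagged _ k (fun k0 => ('I_(n k0) * 'I_(n k0))%type) (i, j))).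
Proof.
move=> npos hH hB hR s0 hcoer lam Hsp k.
case: hH => ax cp.
case: hB => hb hadd hsc hcomp hcomm.
set Top := fun p : entry_index n => Rop (tag p) (tagged p).1 (tagged p).2.
have TB : forall p, B (Top p) by move=> p; apply: hR.
have TL : forall p a x y, Top p (a *: x + y) = a *: Top p x + Top p y.
  by move=> p; case: (hb _ (TB p)).
have Tcomm : forall p q x, Top p (Top q x) = Top q (Top p x).
  by move=> p q x; have := hcomm _ _ (TB p) (TB q); move/(congr1 (fun f => f x)).
set Lam := \matrix_(i < n k, j < n k) lam (@Tagged _ k (fun k0 => ('I_(n k0) * 'I_(n k0))%type) (i, j)).
apply: NNPP => hnPi.
have [v hv] := not_all_ex_not _ _ hnPi.
have [hv0 hnp] := imply_to_and _ _ hv.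
pose w i := v i ord0.
pose tg (i j : 'I_(n k)) : entry_index n :=
  @Tagged _ k (fun k0 => ('I_(n k0) * 'I_(n k0))%type) (i, j).
have RL : forall i j a x y, Rop k i j (a *: x + y) = a *: Rop k i j x + Rop k i j y.
  by move=> i j; exact: (TL (tg i j)).
pose cf (p : entry_index n) := \sum_i \sum_j (p == tg i j)%:R * ((w i)^* * w j).
pose Aop y := \sum_p cf p *: Dk Top lam p y.
have ALin : forall a x y, Aop (a *: x + y) = a *: Aop x + Aop y.
  move=> a x y; rewrite /Aop scaler_sumr -big_split; apply: eq_bigr => p _ /=.
  by rewrite (DL lam TL) scalerDr !scalerA [cf p * a]mulrC.
have hA2 : forall y, Aop y = \sum_i \sum_j ((w i)^* * w j) *: Dk Top lam (tg i j) y.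
  move=> y; rewrite /Aop.
  rewrite (eq_bigr (fun p => \sum_i \sum_j ((p == tg i j)%:R * ((w i)^* * w j)) *: Dk Top lam p y)); last first.
    by move=> p _; rewrite scaler_suml; apply: eq_bigr => i _; rewrite scaler_suml.
  rewrite exchange_big; apply: eq_bigr => i _; rewrite exchange_big; apply: eq_bigr => j _.
  rewrite (bigD1 (tg i j)) //= eqxx mul1r big1 ?addr0 // => p hp.
  by rewrite (negbTE hp) mul0r scale0r.
pose mu := \sum_i \sum_j ((w i)^* * w j) * lam (tg i j).
pose W := \sum_i w i * (w i)^*.
have hmu : complex.Re mu <= 0.
  have eM : (conjtr v *m (Lam + conjtr Lam) *m v) ord0 ord0 = mu + mu^*.
    rewrite quadE /mu [X in _ = X + _]exchange_big /= rmorph_sum -big_split.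
    apply: eq_bigr => j _; rewrite rmorph_sum -big_split; apply: eq_bigr => i _ /=.
    rewrite /Lam /conjtr !mxE !rmorphM /= conjCK /w /tg; ring.
  rewrite eM addJ in hnp.
  have : ~ (((0:R)%:C)%C < ((complex.Re mu *+ 2)%:C)%C) by [].
  rewrite ltcR => h; have : ~~ (0 < complex.Re mu *+ 2) by apply/negP.
  rewrite -leNgt mulr2n; lra.
have hW : 0 < complex.Re W.
  have [i0 hi0] : exists i, w i != 0.
    case: (pickP (fun i => w i != 0)) => [i hi|h]; first by exists i.
    exfalso; move/eqP: hv0; apply; apply/matrixP => i j.
    by rewrite (ord1 j) !mxE; move: (h i) => /= /negbFE /eqP.
  rewrite /W ReS (bigD1 i0) //=.
  have h1 : 0 < complex.Re (w i0 * (w i0)^*).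
    by have := mul_conjC_gt0 (w i0); rewrite hi0 ltcE => /andP[].
  have h2 : 0 <= \sum_(i | i != i0) complex.Re (w i * (w i)^*).
    by apply: sumr_ge0 => i _; apply: ReJJ_ge0.
  lra.
pose c0 := s * complex.Re W / 2%:R.
have c0pos : 0 < c0 by rewrite /c0 divr_gt0 // mulr_gt0.
have hc0 : forall y, c0 * Nm ip y <= Pr ip (Aop y) y.
  move=> y.
  pose Z := \sum_i \sum_j ((w i)^* * w j) * ip (Rop k i j y) y.
  have eA : ip (Aop y) y = Z - mu * ip y y.
    rewrite hA2 (ipSl ax) /Z /mu mulr_suml -sumrB; apply: eq_bigr => i _.
    rewrite (ipSl ax) mulr_suml -sumrB; apply: eq_bigr => j _.
    rewrite (ipZl ax) /Dk (ipBl ax) (ipZl ax) /=; ring.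
  have hyp := hcoer k (fun j => w j *: y).
  have e1 : ipn ip (opmx_apply (Rop k) (fun j => w j *: y)) (fun j => w j *: y) = Z.
    rewrite /ipn /opmx_apply /Z; apply: eq_bigr => i _.
    rewrite (ipSl ax); apply: eq_bigr => j _.
    rewrite (linZ (RL i j)) (ipZl ax) (ipZr ax); ring.
  have e2 : ipn ip (fun j => w j *: y) (fun j => w j *: y) = W * ip y y.
    rewrite /ipn /W mulr_suml; apply: eq_bigr => i _.
    by rewrite (ipZl ax) (ipZr ax) mulrA.
  rewrite [X in _ <= _ + X](ipn_sym ax) e1 e2 in hyp.
  move: hyp; rewrite lecE => /andP[_].
  rewrite ReD ReJ (ipxx ax) ReM ReMr => hyp.
  rewrite /Pr eA ReD ReN (ipxx ax) ReMr.
  have hN := Nm_ge0 ax y.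
  have hm : complex.Re mu * Nm ip y <= 0 by rewrite mulr_le0_ge0.
  have -> : c0 * Nm ip y = s * (complex.Re W * Nm ip y) / 2%:R by rewrite /c0; ring.
  lra.
have hbd : bnd ip Aop.
  have hD : forall p, bnd ip (fun y => cf p *: Dk Top lam p y).
    move=> p; apply: (bnd_scale ax).
    have bid : bnd ip id by exists 1 => y; rewrite mul1r.
    have [M hM] := bnd_add ax (bnd_op ax (hb _ (TB p))) (bnd_scale ax (- lam p) bid).
    by exists M => y; rewrite /Dk -scaleNr; exact: hM.
  exact: (bnd_sum ax _ _ hD).
have [M0 hM0] := hbd.
have surj := A_surj ax cp ALin c0pos hM0 hc0.
have Ainj : forall x x', Aop x = Aop x' -> x = x'.
  move=> x x' e; apply/eqP; rewrite -subr_eq0; apply/eqP.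
  apply: (Nm_eq0 ax); apply/le_anti; rewrite Nm_ge0 // andbT.
  have := hc0 (x - x'); rewrite (linB ALin) e subrr /Pr (ip0l ax) /= => h.
  by rewrite -(pmulr_rle0 _ c0pos).
have ex : forall y, exists x, Aop x == y.
  by move=> y; have [x hx] := surj y; exists x; apply/eqP.
pose Ainv y := xchoose (ex y).
have AinvK : forall y, Aop (Ainv y) = y by move=> y; apply/eqP; exact: (xchooseP (ex y)).
have AinvL : forall a x y, Ainv (a *: x + y) = a *: Ainv x + Ainv y.
  by move=> a x y; apply: Ainj; rewrite ALin !AinvK.
have ATcomm : forall q y, Top q (Aop y) = Aop (Top q y).
  move=> q y; rewrite /Aop (linsum (TL q)); apply: eq_bigr => p _.
  by rewrite (linZ (TL q)) /Dk (linB (TL q)) (linZ (TL q)) Tcomm.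
have AinvT : forall q y, Ainv (Top q y) = Top q (Ainv y).
  by move=> q y; apply: Ainj; rewrite AinvK -ATcomm AinvK.
pose U p y := cf p *: Ainv y.
have UL : forall p a x y, U p (a *: x + y) = a *: U p x + U p y.
  by move=> p a x y; rewrite /U AinvL scalerDr !scalerA [cf p * a]mulrC.
have DU : forall j l y, Dk Top lam j (U l y) = U l (Dk Top lam j y).
  move=> j l y; rewrite /U /Dk (linZ (TL j)) (linB AinvL) (linZ AinvL) AinvT.
  by rewrite scalerBr !scalerA mulrC.
have sumUD : forall y, \sum_j U j (Dk Top lam j y) = y.
  move=> y; transitivity (Ainv (Aop y)); last by apply: Ainj; rewrite AinvK.
  rewrite /Aop (linsum AinvL); apply: eq_bigr => p _; by rewrite /U (linZ AinvL).
exact: (koszul_exact TL UL DU sumUD Hsp).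
Qed.
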